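(* Let $(X,d)$ be a compact pointed metric space and let $((x_n,y_n))_{n=1}^\infty$ be a Lipschitz interpolating sequence for $\mathrm{Lip}_0(X)$ in $\widetilde X$. Then $d(x_n,y_n)\to 0$ as $n\to\infty$.
   Context: All spaces are real. $(X,d)$ has a base point $0$, $\widetilde{X}=\{(x,y)\in X\times X: x\neq y\}$. $\mathrm{Lip}_0(X)$ is the Banach space of Lipschitz $f:X\to\mathbb{R}$ with $f(0)=0$, normed by the best Lipschitz constant. A sequence $((x_n,y_n))_{n=1}^\infty$ in $\widetilde X$ is Lipschitz interpolating for $\mathrm{Lip}_0(X)$ if the operator $T:\mathrm{Lip}_0(X)\to\ell_\infty$, $T(f)=\big((f(x_n)-f(y_n))/d(x_n,y_n)\big)_{n}$, is surjective. *)

(* Defs.v *)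
From Stdlib Require Import Reals.
Open Scope R_scope.

Definition is_metric {X : Type} (d : X -> X -> R) : Prop :=
  (forall x y, 0 <= d x y) /\
  (forall x y, d x y = 0 <-> x = y) /\
  (forall x y, d x y = d y x) /\
  (forall x y z, d x z <= d x y + d y z).

Definition metric_open {X : Type} (d : X -> X -> R) (U : X -> Prop) : Prop :=
  forall x, U x -> exists eps, 0 < eps /\ forall y, d x y < eps -> U y.

Definition metric_compact {X : Type} (d : X -> X -> R) : Prop :=
  forall (I : Type) (U : I -> X -> Prop),
    (forall i, metric_open d (U i)) ->
    (forall x, exists i, U i x) ->
    exists l : list I, forall x, exists i, List.In i l /\ U i x.

Definition lipschitz {X : Type} (d : X -> X -> R) (f : X -> R) : Prop :=
  exists L, 0 <= L /\ forall x y, Rabs (f x - f y) <= L * d x y.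

Definition in_Lip0 {X : Type} (d : X -> X -> R) (x0 : X) (f : X -> R) : Prop :=
  lipschitz d f /\ f x0 = 0.

Definition bounded_seq (a : nat -> R) : Prop :=
  exists M, forall n, Rabs (a n) <= M.

(* ((x_n,y_n))_n with x_n <> y_n is Lipschitz interpolating for Lip_0(X):
   the operator T f = ((f x_n - f y_n)/d(x_n,y_n))_n from Lip_0(X) to
   l_infinity is surjective. *)
Definition lipschitz_interpolating {X : Type} (d : X -> X -> R) (x0 : X)
    (x y : nat -> X) : Prop :=
  (forall n, x n <> y n) /\
  forall a : nat -> R, bounded_seq a ->
    exists f : X -> R, in_Lip0 d x0 f /\
      forall n, (f (x n) - f (y n)) / d (x n) (y n) = a n.

(* Main.v *)
Require Import Defs.
From Stdlib Require Import Reals Lra Lia Classical ClassicalEpsilon List.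
Open Scope R_scope.

Definition infinite (S : nat -> Prop) := forall N, exists n, (N <= n)%nat /\ S n.

Lemma pigeon {I : Type} (l : list I) (P : I -> nat -> Prop) :
  (forall N, exists n, (N <= n)%nat /\ exists i, In i l /\ P i n) ->
  exists i, In i l /\ forall N, exists n, (N <= n)%nat /\ P i n.
Proof.
  induction l as [|a l IH]; intros H.
  - destruct (H 0%nat) as [n [_ [i [[] _]]]].
  - destruct (classic (forall N, exists n, (N <= n)%nat /\ P a n)) as [Ha|Ha].
    + exists a; split; [left; reflexivity|exact Ha].
    + apply not_all_ex_not in Ha as [N0 HN0].
      destruct IH as [i [Hi Hi']].
      * intros N. destruct (H (Nat.max N N0)) as [n [Hn [i [Hi HP]]]].
        exists n; split; [lia|].
        destruct Hi as [<-|Hi].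
        -- exfalso; apply HN0; exists n; split; [lia|exact HP].
        -- exists i; auto.
      * exists i; split; [right; exact Hi|exact Hi'].
Qed.

Lemma refine1 {X : Type} (d : X -> X -> R) (z : nat -> X) (S : nat -> Prop) (delta : R) :
  is_metric d -> metric_compact d -> 0 < delta -> infinite S ->
  exists S' : nat -> Prop, infinite S' /\ (forall n, S' n -> S n) /\
    forall n m, S' n -> S' m -> d (z n) (z m) < delta.
Proof.
  intros [Hpos [Hzero [Hsym Htri]]] Hc Hd HS.
  destruct (Hc X (fun c w => d c w < delta / 2)) as [l Hl].
  - intros c w Hw. exists (delta/2 - d c w); split; [lra|].
    intros v Hv. specialize (Htri c w v). lra.
  - intros w. exists w. rewrite (proj2 (Hzero w w) eq_refl). lra.
  - destruct (pigeon l (fun c n => S n /\ d c (z n) < delta / 2)) as [c [_ Hcn]].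
    + intros N. destruct (HS N) as [n [Hn Sn]]. exists n; split; auto.
      destruct (Hl (z n)) as [i [Hi Hi']]. exists i; auto.
    + exists (fun n => S n /\ d c (z n) < delta / 2). split; [exact Hcn|split].
      * intros n [Hn _]; exact Hn.
      * intros n m [_ H1] [_ H2]. specialize (Htri (z n) c (z m)).
        rewrite (Hsym (z n) c) in Htri. lra.
Qed.

Lemma refine2 {X : Type} (d : X -> X -> R) (x y : nat -> X) (S : nat -> Prop) (k : nat) :
  is_metric d -> metric_compact d ->
  exists S' : nat -> Prop, infinite S -> (infinite S' /\ (forall n, S' n -> S n) /\
    forall n m, S' n -> S' m -> d (x n) (x m) < / (INR k + 1) /\ d (y n) (y m) < / (INR k + 1)).
Proof.
  intros Hm Hc.
  destruct (classic (infinite S)) as [HS|HS]; [|exists S; tauto].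
  assert (Hd : 0 < / (INR k + 1)) by (apply Rinv_0_lt_compat; pose proof (pos_INR k); lra).
  destruct (refine1 d x S _ Hm Hc Hd HS) as [S1 [H1 [H1s H1d]]].
  destruct (refine1 d y S1 _ Hm Hc Hd H1) as [S2 [H2 [H2s H2d]]].
  exists S2; intros _. split; [exact H2|split]; auto.
Qed.

Fixpoint build (g : (nat -> Prop) -> nat -> (nat -> Prop)) (pick : (nat -> Prop) -> nat)
  (S0 : nat -> Prop) (k : nat) : (nat -> Prop) * nat :=
  match k with
  | O => let T := g S0 O in (T, pick T)
  | S k' => let (T, p) := build g pick S0 k' in
            let T' := g (fun n => T n /\ (p < n)%nat) k in (T', pick T')
  end.

Lemma build_props g pick S0 (D : nat -> (nat -> Prop) -> Prop) :
  (forall S k, infinite S -> infinite (g S k) /\ (forall n, g S k n -> S n) /\ D k (g S k)) ->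
  (forall S, infinite S -> S (pick S)) ->
  infinite S0 ->
  forall k, infinite (fst (build g pick S0 k)) /\ fst (build g pick S0 k) (snd (build g pick S0 k))
    /\ D k (fst (build g pick S0 k)) /\ (forall n, fst (build g pick S0 k) n -> S0 n)
    /\ (forall n, fst (build g pick S0 (S k)) n -> fst (build g pick S0 k) n)
    /\ (snd (build g pick S0 k) < snd (build g pick S0 (S k)))%nat.
Proof.
  intros Hg Hp HS0.
  assert (Hinf : forall T p, infinite T -> infinite (fun n => T n /\ (p < n)%nat)).
  { intros T p HT N. destruct (HT (Nat.max N (S p))) as [n [Hn Tn]].
    exists n; split; [lia|split; auto; lia]. }
  assert (Hstep : forall k, infinite (fst (build g pick S0 k)) /\
      fst (build g pick S0 k) (snd (build g pick S0 k)) /\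
      D k (fst (build g pick S0 k)) /\ (forall n, fst (build g pick S0 k) n -> S0 n)).
  { induction k as [|k IH].
    - simpl. destruct (Hg S0 O HS0) as [A [B C]]. repeat split; auto. apply Hp; exact A.
    - simpl. destruct (build g pick S0 k) as [T p]. simpl in IH |- *.
      destruct IH as [I1 [I2 [I3 I4]]].
      destruct (Hg (fun n => T n /\ (p < n)%nat) (S k) (Hinf T p I1)) as [A [B C]].
      split; [exact A|split; [apply Hp; exact A|split; [exact C|]]].
      intros n Hn. apply I4. apply (B n Hn). }
  intros k. destruct (Hstep k) as [A [B [C E]]].
  repeat (split; auto).
  - intros n. simpl. destruct (build g pick S0 k) as [T p] eqn:E1. simpl in *.
    destruct (Hg (fun n => T n /\ (p < n)%nat) (S k) (Hinf T p A)) as [_ [HH _]].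
    intros Hn. apply (HH n Hn).
  - destruct (Hstep (S k)) as [_ [B' _]]. revert B'. simpl.
    destruct (build g pick S0 k) as [T p] eqn:E1. simpl in *.
    destruct (Hg (fun n => T n /\ (p < n)%nat) (S k) (Hinf T p A)) as [_ [HH _]].
    intros Hn. apply (HH _ Hn).
Qed.

Theorem proposition4p1 (X : Type) (d : X -> X -> R) (x0 : X)
    (x y : nat -> X) :
  is_metric d ->
  metric_compact d ->
  lipschitz_interpolating d x0 x y ->
  Un_cv (fun n => d (x n) (y n)) 0.
Proof.
  intros Hm Hc [Hneq Hint].
  pose proof Hm as [Hpos [Hzero [Hsym Htri]]].
  destruct (classic (Un_cv (fun n => d (x n) (y n)) 0)) as [H|H]; [exact H|exfalso].
  assert (Heps : exists eps, eps > 0 /\ infinite (fun n => eps <= d (x n) (y n))).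
  { apply NNPP; intro H0; apply H; intros eps Heps.
    destruct (classic (exists N, forall n, (n >= N)%nat -> R_dist (d (x n) (y n)) 0 < eps))
      as [HN|HN]; [exact HN|].
    exfalso; apply H0; exists eps; split; [exact Heps|]; intro N.
    apply NNPP; intro H1; apply HN; exists N; intros n Hn.
    unfold R_dist. rewrite Rminus_0_r, Rabs_right by (apply Rle_ge; apply Hpos).
    apply Rnot_le_lt; intro; apply H1; exists n; split; [lia|assumption]. }
  destruct Heps as [eps [Heps HS0]].
  set (S0 := fun n => eps <= d (x n) (y n)) in HS0.
  set (D := fun k (T : nat -> Prop) => forall n m, T n -> T m ->
      d (x n) (x m) < / (INR k + 1) /\ d (y n) (y m) < / (INR k + 1)).
  set (g := fun (S : nat -> Prop) (k : nat) => epsilon (inhabits (fun _ : nat => True))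
      (fun S' : nat -> Prop => infinite S -> (infinite S' /\ (forall n, S' n -> S n) /\ D k S'))).
  set (pick := fun (S : nat -> Prop) => epsilon (inhabits 0%nat) (fun n => S n)).
  assert (Hg : forall S k, infinite S -> infinite (g S k) /\ (forall n, g S k n -> S n) /\ D k (g S k)).
  { intros S k HS. unfold g. apply (@epsilon_spec _ _ (fun S' : nat -> Prop => infinite S -> (infinite S' /\ (forall n, S' n -> S n) /\ D k S')) (refine2 d x y S k Hm Hc)).
    exact HS. }
  assert (Hp : forall S, infinite S -> S (pick S)).
  { intros S HS. unfold pick. apply epsilon_spec. destruct (HS 0%nat) as [n [_ Hn]]. exists n; exact Hn. }
  pose proof (build_props g pick S0 D Hg Hp HS0) as BP.
  set (T := fun k => fst (build g pick S0 k)).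
  set (phi := fun k => snd (build g pick S0 k)).
  assert (Hsub : forall k l, (k <= l)%nat -> forall n, T l n -> T k n).
  { intros k l Hkl. induction Hkl as [|l Hkl IH]; [auto|].
    intros n Hn. apply IH. apply (BP l). exact Hn. }
  assert (Hmono : forall k l, (k < l)%nat -> (phi k < phi l)%nat).
  { intros k l Hkl. induction Hkl as [|l Hkl IH].
    - apply (BP k).
    - pose proof (proj2 (proj2 (proj2 (proj2 (proj2 (BP l)))))). unfold phi in *. lia. }
  assert (Hinj : forall k l, phi k = phi l -> k = l).
  { intros k l E. destruct (Nat.lt_trichotomy k l) as [Hl|[Hl|Hl]]; auto.
    - apply Hmono in Hl. lia.
    - apply Hmono in Hl. lia. }
  set (a := fun n => if excluded_middle_informative (exists k, n = phi (2 * k)%nat) then 1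
      else if excluded_middle_informative (exists k, n = phi (2 * k + 1)%nat) then -1 else 0).
  destruct (Hint a) as [f [[[L [HL Hf]] _] Hfa]].
  { exists 1. intro n. unfold a.
    destruct (excluded_middle_informative _); [rewrite Rabs_R1; lra|].
    destruct (excluded_middle_informative _); [unfold Rabs; destruct (Rcase_abs _); lra|].
    rewrite Rabs_R0; lra. }
  destruct (archimed (L / eps)) as [HK _].
  destruct (INR_unbounded (L / eps)) as [K HK'].
  set (n := phi (2 * K)%nat). set (m := phi (2 * K + 1)%nat).
  assert (Han : a n = 1).
  { unfold a. destruct (excluded_middle_informative _) as [_|C]; [reflexivity|].
    exfalso; apply C; exists K; reflexivity. }
  assert (Ham : a m = -1).
  { unfold a. destruct (excluded_middle_informative _) as [[k Ek]|_].
    - apply Hinj in Ek. lia.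
    - destruct (excluded_middle_informative _) as [_|C]; [reflexivity|].
      exfalso; apply C; exists K; reflexivity. }
  assert (Sn : eps <= d (x n) (y n)).
  { pose proof (BP (2*K)%nat) as [_ [B2 [_ [B4 _]]]]. apply B4, B2. }
  assert (Sm : eps <= d (x m) (y m)).
  { pose proof (BP (2*K+1)%nat) as [_ [B2 [_ [B4 _]]]]. apply B4, B2. }
  assert (Dnm : d (x n) (x m) < / (INR (2*K) + 1) /\ d (y n) (y m) < / (INR (2*K) + 1)).
  { pose proof (BP (2*K)%nat) as [_ [B2 [B3 _]]]. apply B3; [exact B2|].
    apply (Hsub (2*K)%nat (2*K+1)%nat); [lia|].
    pose proof (BP (2*K+1)%nat) as [_ [B2' _]]. exact B2'. }
  pose proof (Hfa n) as Fn. pose proof (Hfa m) as Fm. rewrite Han in Fn. rewrite Ham in Fm.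
  assert (En : f (x n) - f (y n) = d (x n) (y n)).
  { apply (Rmult_eq_reg_r (/ d (x n) (y n))); [|apply Rinv_neq_0_compat; lra].
    rewrite Rinv_r by lra. exact Fn. }
  assert (Em : f (x m) - f (y m) = - d (x m) (y m)).
  { apply (Rmult_eq_reg_r (/ d (x m) (y m))); [|apply Rinv_neq_0_compat; lra].
    rewrite <- Ropp_mult_distr_l, Rinv_r by lra. exact Fm. }
  pose proof (Hf (x n) (x m)) as L1. pose proof (Hf (y n) (y m)) as L2.
  pose proof (Rle_abs (f (x n) - f (x m))) as A1.
  pose proof (Rabs_Ropp (f (y n) - f (y m))) as A2.
  pose proof (Rle_abs (- (f (y n) - f (y m)))) as A3.
  assert (HK2 : INR K <= INR (2 * K)) by (apply le_INR; lia).
  set (r := INR (2*K)) in *.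
  assert (Hr : 0 < r + 1) by (pose proof (pos_INR K); lra).
  destruct Dnm as [D1 D2].
  assert (Hsum : 2 * eps <= L * (d (x n) (x m) + d (y n) (y m))) by nra.
  assert (Hlt : L * (d (x n) (x m) + d (y n) (y m)) <= L * (2 * / (r + 1))) by nra.
  assert (Hle : eps * (r + 1) <= L).
  { assert (2 * eps <= L * (2 * / (r + 1))) by lra.
    apply (Rmult_le_compat_r (r + 1)) in H0; [|lra].
    replace (L * (2 * / (r + 1)) * (r + 1)) with (2 * L) in H0 by (field; lra). lra. }
  assert (L / eps < r + 1) by lra.
  apply (Rmult_lt_compat_r eps) in H0; [|lra].
  replace (L / eps * eps) with L in H0 by (field; lra). lra.
Qed.
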